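(* Let $\mathcal{X}$ be a connected $n$-premaniplex with base flag $x_0$, let $(\mathcal{Y},\eta)$ be an $(n,m)$-voltage operator with $\mathcal{Y}$ connected and base flag $y_0$, let $N=\operatorname{Stab}_{\mathcal{C}^n}(x_0)$, $L=\operatorname{Stab}_{\mathcal{C}^m}(y_0)$, and $\zeta:L\to\mathcal{C}^n$, $\zeta(\omega)=\eta(W_\omega(y_0))$. Suppose $\mathcal{X}\rtimes_\eta\mathcal{Y}$ is connected. Then for $\omega\in\mathcal{C}^m$ there exists an automorphism $\alpha_\omega$ of $\mathcal{X}\rtimes_\eta\mathcal{Y}$ with $(x_0,y_0)\alpha_\omega=\omega(x_0,y_0)$ if and only if $\omega\in\operatorname{N}_{\mathcal{C}^m}(\zeta^{-1}(N))$; moreover $\operatorname{Aut}(\mathcal{X}\rtimes_\eta\mathcal{Y})\cong\operatorname{N}_{\mathcal{C}^m}(\zeta^{-1}(N))/\zeta^{-1}(N)$.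
   Context: An $n$-premaniplex is an edge-coloured graph (semi-edges and parallel edges allowed) with colours $\{0,\dots,n-1\}$ such that every vertex (flag) is the start of exactly one dart of each colour, and for $|i-j|\ge2$ alternating $i,j$-paths of length 4 are closed; $x^i$ is the $i$-adjacent flag of $x$. $\mathcal{C}^n=\langle r_0,\dots,r_{n-1}\mid r_i^2,\ (r_ir_j)^2\ (|i-j|\ge2)\rangle$ acts on the left on flags by $r_ix=x^i$; automorphisms act on the right. $\operatorname{N}_G(H)$ denotes the normaliser. For a flag $y$ of an $m$-premaniplex $\mathcal{Y}$ and $\omega\in\mathcal{C}^m$, $W_\omega(y)$ is the homotopy class of paths from $y$ whose colour sequence $i_1,\dots,i_k$ satisfies $r_{i_k}\cdots r_{i_1}=\omega$; these form the fundamental groupoid $\Pi(\mathcal{Y})$. A voltage assignment $\eta:\Pi(\mathcal{Y})\to\mathcal{C}^n$ satisfies $\eta(W_1W_2)=\eta(W_2)\eta(W_1)$; $(\mathcal{Y},\eta)$ is an $(n,m)$-voltage operator. $\mathcal{X}\rtimes_\eta\mathcal{Y}$ has flags $\mathcal{X}\times\mathcal{Y}$ and $(x,y)^i=(\eta(W_{r_i}(y))x,r_iy)$, $i\in\{0,\dots,m-1\}$; hence $\omega(x,y)=(\eta(W_\omega(y))x,\omega y)$. *)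

(* Defs.v *)
From mathcomp Require Import all_boot.
Set Implicit Arguments. Unset Strict Implicit. Unset Printing Implicit Defensive.

Definition far (k : nat) (i j : 'I_k) : bool := (i + 2 <= j)%N || (j + 2 <= i)%N.

(** The Coxeter group C^k = < r_0..r_{k-1} | r_i^2, (r_i r_j)^2 (|i-j|>=2) >,
    presented as words over 'I_k modulo the congruence generated by the
    relators.  The word [:: a1; ...; ak] denotes r_{a1} r_{a2} ... r_{ak}. *)
Inductive cox_eq (k : nat) : seq 'I_k -> seq 'I_k -> Prop :=
| cox_refl w : cox_eq w w
| cox_sym w w' : cox_eq w w' -> cox_eq w' w
| cox_trans w1 w2 w3 : cox_eq w1 w2 -> cox_eq w2 w3 -> cox_eq w1 w3
| cox_sq u v (i : 'I_k) : cox_eq (u ++ [:: i; i] ++ v) (u ++ v)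
| cox_far u v (i j : 'I_k) : far i j -> cox_eq (u ++ [:: i; j; i; j] ++ v) (u ++ v).

Definition wact (F : Type) (k : nat) (adj : 'I_k -> F -> F) (w : seq 'I_k) (x : F) : F :=
  foldr adj x w.

(** An n-premaniplex: flags with an i-adjacency for each colour i (x^i),
    each an involution (one dart of each colour at each flag; semi-edges are
    fixed points), and alternating i,j-paths of length 4 closed for |i-j|>=2. *)
Record premaniplex (n : nat) := Premaniplex {
  flag : Type;
  adj : 'I_n -> flag -> flag;
  adj_invol : forall i x, adj i (adj i x) = x;
  adj_far : forall i j x, far i j -> adj i (adj j (adj i (adj j x))) = x
}.

Definition connectedf (F : Type) (k : nat) (adj : 'I_k -> F -> F) : Prop :=
  forall x y : F, exists w, wact adj w x = y.

Definition pconnected (n : nat) (X : premaniplex n) : Prop := connectedf (@adj n X).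

(** The class W_omega(y) is
    represented by (y, w) with w a word for omega (it ends at omega y);
    eta must be well defined on classes and satisfy
    eta(W1 W2) = eta(W2) eta(W1), i.e. eta(W_{w'w}(y)) = eta(W_{w'}(w y)) eta(W_w(y)). *)
Definition is_voltage (n m : nat) (Y : premaniplex m)
    (eta : flag Y -> seq 'I_m -> seq 'I_n) : Prop :=
  (forall y w w', cox_eq w w' -> cox_eq (eta y w) (eta y w')) /\
  (forall y w w', cox_eq (eta y (w' ++ w)) (eta (wact (@adj m Y) w y) w' ++ eta y w)).

Definition prod_adj (n m : nat) (X : premaniplex n) (Y : premaniplex m)
    (eta : flag Y -> seq 'I_m -> seq 'I_n) (i : 'I_m) (p : flag X * flag Y)
    : flag X * flag Y :=
  (wact (@adj n X) (eta p.2 [:: i]) p.1, @adj m Y i p.2).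

(** Automorphism (acting on the right: (p)alpha := a p): colour-preserving
    bijection of flags. *)
Definition is_aut (F : Type) (k : nat) (adj : 'I_k -> F -> F) (a : F -> F) : Prop :=
  bijective a /\ forall i x, a (adj i x) = adj i (a x).

(** zeta^{-1}(N), with L = Stab(y0), N = Stab(x0), zeta(omega) = eta(W_omega(y0)). *)
Definition zeta_preim (n m : nat) (X : premaniplex n) (x0 : flag X)
    (Y : premaniplex m) (y0 : flag Y) (eta : flag Y -> seq 'I_m -> seq 'I_n)
    (w : seq 'I_m) : Prop :=
  wact (@adj m Y) w y0 = y0 /\ wact (@adj n X) (eta y0 w) x0 = x0.

(** omega is in the normaliser N_{C^k}(K) : omega K omega^{-1} = K
    (the inverse of the word w is rev w since generators are involutions). *)
Definition normalizes (k : nat) (K : seq 'I_k -> Prop) (w : seq 'I_k) : Prop :=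
  forall u, K u <-> K (w ++ u ++ rev w).

(* Main.v *)
Require Import Defs.
From mathcomp Require Import all_boot.
From Stdlib Require Import ClassicalEpsilon.

Set Implicit Arguments. Unset Strict Implicit.

Section Generic.
Variables (F : Type) (k : nat) (ad : 'I_k -> F -> F).
Hypothesis inv : forall i x, ad i (ad i x) = x.

Lemma wact_cat u v x : wact ad (u ++ v) x = wact ad u (wact ad v x).
Proof. by rewrite /wact foldr_cat. Qed.

Lemma wact_revK w x : wact ad (rev w) (wact ad w x) = x.
Proof.
elim: w x => [//|i w IH] x.
rewrite rev_cons -cats1 wact_cat /= inv; exact: IH.
Qed.

Lemma wact_revK' w x : wact ad w (wact ad (rev w) x) = x.
Proof. by rewrite -{1}(revK w) wact_revK. Qed.

Lemma aut_wact a v p : is_aut ad a -> a (wact ad v p) = wact ad v (a p).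
Proof.
move=> [_ Ha]; elim: v => [//|i v IH] /=; by rewrite Ha IH.
Qed.

Variable p0 : F.
Definition S v := wact ad v p0 = p0.

Lemma norm_rev w : normalizes S w -> normalizes S (rev w).
Proof.
move=> H v; rewrite revK.
have := H (rev w ++ v ++ w).
rewrite /S !wact_cat !wact_revK'.
by move=> E; split=> /E.
Qed.

Lemma norm_cat w w' : normalizes S w -> normalizes S w' -> normalizes S (w ++ w').
Proof.
move=> H H' v; rewrite H' H rev_cat.
by rewrite !catA.
Qed.

Lemma norm_wd w u u' : normalizes S w -> wact ad u p0 = wact ad u' p0 ->
  wact ad u (wact ad w p0) = wact ad u' (wact ad w p0).
Proof.
move=> H E.
have Sv : S (rev u' ++ u) by rewrite /S wact_cat E wact_revK.
have := (norm_rev H (rev u' ++ u)).1 Sv.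
rewrite revK /S !wact_cat => E2.
have := congr1 (fun z => wact ad u' (wact ad w z)) E2.
by rewrite /= wact_revK' wact_revK'.
Qed.

Hypothesis conn : connectedf ad.

Definition pick (p : F) : seq 'I_k := proj1_sig (constructive_indefinite_description _ (conn p0 p)).
Lemma pickP p : wact ad (pick p) p0 = p.
Proof. exact: proj2_sig (constructive_indefinite_description _ (conn p0 p)). Qed.

Definition Phi (w : seq 'I_k) (p : F) : F := wact ad (pick p) (wact ad w p0).

Lemma PhiE w u : normalizes S w -> Phi w (wact ad u p0) = wact ad u (wact ad w p0).
Proof. move=> H; apply: norm_wd => //; exact: pickP. Qed.

Lemma Phi_aut w : normalizes S w -> is_aut ad (Phi w).
Proof.
move=> H; split.
  exists (Phi (rev w)) => p.
    rewrite -(pickP p) PhiE // -wact_cat PhiE ?wact_cat ?wact_revK' //.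
    exact: norm_rev.
  rewrite -(pickP p) PhiE ?wact_cat ?wact_revK'; last exact: norm_rev.
  by rewrite -wact_cat PhiE // wact_cat wact_revK.
move=> i p; rewrite -(pickP p).
have -> : ad i (wact ad (pick p) p0) = wact ad (i :: pick p) p0 by [].
by rewrite !PhiE.
Qed.

Lemma aut_norm a w : is_aut ad a -> a p0 = wact ad w p0 -> normalizes S (rev w).
Proof.
move=> Ha E v; rewrite revK /S !wact_cat; split.
  move=> Sv; rewrite -E -(aut_wact v p0 Ha) Sv E; exact: wact_revK.
move=> Sv.
have E2 : wact ad v (wact ad w p0) = wact ad w p0.
  by rewrite -(wact_revK' w (wact ad v (wact ad w p0))) Sv.
case: (Ha) => [[b ab _]] _.
by rewrite -(ab (wact ad v p0)) aut_wact // E E2 -E ab.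
Qed.

Lemma aut_norm' a w : is_aut ad a -> a p0 = wact ad w p0 -> normalizes S w.
Proof. move=> Ha E; rewrite -(revK w); apply: norm_rev; exact: aut_norm E. Qed.


End Generic.


Section Prod.
Variables (n m : nat) (X : premaniplex n) (Y : premaniplex m)
  (eta : flag Y -> seq 'I_m -> seq 'I_n).
Hypothesis Heta : is_voltage eta.

Lemma wact_cox a b x : cox_eq a b -> wact (@adj n X) a x = wact (@adj n X) b x.
Proof.
elim=> //.
- by move=> w1 w2 w3 _ -> _ ->.
- by move=> u v i; rewrite !wact_cat /= adj_invol.
- by move=> u v i j f; rewrite !wact_cat /= adj_far.
Qed.

Lemma eta_nil y x : wact (@adj n X) (eta y [::]) x = x.
Proof.
have E := wact_cox x (Heta.2 y [::] [::]).
rewrite /= wact_cat in E.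
have := congr1 (wact (@adj n X) (rev (eta y [::]))) E.
rewrite !wact_revK //; exact: adj_invol.
Qed.

Lemma prod_wact v x y : wact (@prod_adj n m X Y eta) v (x, y) =
  (wact (@adj n X) (eta y v) x, wact (@adj m Y) v y).
Proof.
elim: v => [|i v IH]; first by rewrite /= eta_nil.
rewrite /= IH /prod_adj /=.
have E := wact_cox x (Heta.2 y v [:: i]).
by rewrite /= wact_cat in E; rewrite E.
Qed.

Lemma prod_invol i p : @prod_adj n m X Y eta i (@prod_adj n m X Y eta i p) = p.
Proof.
case: p => x y.
have -> : @prod_adj n m X Y eta i (@prod_adj n m X Y eta i (x, y)) = wact (@prod_adj n m X Y eta) [:: i; i] (x, y) by [].
rewrite prod_wact /= adj_invol.
by rewrite (wact_cox x (Heta.1 y _ _ (cox_sq [::] [::] i))) eta_nil.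
Qed.

End Prod.

Lemma norm_ext k (K K' : seq 'I_k -> Prop) w : (forall v, K v <-> K' v) ->
  normalizes K w <-> normalizes K' w.
Proof. move=> E; split=> H u; have := H u; [by rewrite !E | by rewrite -!E]. Qed.

Theorem corollary5p3 (n m : nat) (X : premaniplex n) (x0 : flag X)
    (Y : premaniplex m) (y0 : flag Y) (eta : flag Y -> seq 'I_m -> seq 'I_n) :
  is_voltage eta ->
  pconnected X -> pconnected Y ->
  connectedf (@prod_adj n m X Y eta) ->
  (forall w : seq 'I_m,
     (exists a, is_aut (@prod_adj n m X Y eta) a /\
                a (x0, y0) = wact (@prod_adj n m X Y eta) w (x0, y0))
     <-> normalizes (zeta_preim x0 y0 eta) w) /\
  (exists Phi : seq 'I_m -> flag X * flag Y -> flag X * flag Y,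
     (forall w, normalizes (zeta_preim x0 y0 eta) w ->
        is_aut (@prod_adj n m X Y eta) (Phi w)) /\
     (forall w w', normalizes (zeta_preim x0 y0 eta) w ->
        normalizes (zeta_preim x0 y0 eta) w' ->
        forall p, Phi (w ++ w') p = Phi w' (Phi w p)) /\
     (forall w, normalizes (zeta_preim x0 y0 eta) w ->
        ((forall p, Phi w p = p) <-> zeta_preim x0 y0 eta w)) /\
     (forall a, is_aut (@prod_adj n m X Y eta) a ->
        exists w, normalizes (zeta_preim x0 y0 eta) w /\ forall p, Phi w p = a p)).
Proof.
move=> Heta _ _ conn.
set ad := @prod_adj n m X Y eta.
have inv := @prod_invol n m X Y eta Heta.
set p0 := (x0, y0).
have ZS : forall v, zeta_preim x0 y0 eta v <-> S ad p0 v.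
  move=> v; rewrite /zeta_preim /S /p0 /ad prod_wact //; split.
    by case=> -> ->.
  by case=> -> ->.
have NE : forall w, normalizes (zeta_preim x0 y0 eta) w <-> normalizes (S ad p0) w.
  move=> w; exact: norm_ext.
split.
  move=> w; rewrite NE; split.
    by case=> a [Ha E]; apply: (aut_norm' inv Ha E).
  move=> H; exists (Phi p0 conn w); split; first exact: (Phi_aut inv conn).
  exact: (PhiE inv conn [::] H).
exists (Phi p0 conn); split.
  by move=> w /NE H; apply: (Phi_aut inv conn).
split.
  move=> w w' /NE H /NE H' p.
  rewrite -(pickP p0 conn p) (PhiE inv conn (w:=w ++ w')); last exact: norm_cat.
  rewrite (PhiE inv conn (w:=w)) //.
  have K := PhiE inv conn (pick p0 conn p ++ w) H'.
  by rewrite !wact_cat in K; rewrite K !wact_cat.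
split.
  move=> w /NE H; rewrite ZS; split.
    move=> E; rewrite /S -{2}(E p0); exact: esym (PhiE inv conn [::] H).
  move=> Sw p; rewrite -(pickP p0 conn p) (PhiE inv conn) // Sw //.
move=> a Ha.
have [w Ew] := conn p0 (a p0).
have H := aut_norm' inv Ha (esym Ew).
exists w; split; first by rewrite NE.
move=> p; rewrite -(pickP p0 conn p) (PhiE inv conn) // (aut_wact _ _ Ha) Ew.
by []. Qed.
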